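(* Let $J_-,J_+\subset\mathbb Z$ be disjoint finite arithmetic progressions with the same common difference and $J=J_-\cup J_+$. If $\mathcal D\in\mathrm{DO}_n(J)$ corresponds to a generic twisted $J$-corrugated $n$-gon and $\tilde{\mathcal D}\in\mathrm{DO}_n(J)$ satisfies $\tilde{\mathcal D}_+\mathcal D_-=\tilde{\mathcal D}_-\mathcal D_+$ (so that $\tilde{\mathcal D}$ corresponds to the image under the pentagram map associated with $(J_-,J_+)$), then $$\tilde{\mathcal L}(z)=\tilde{\mathcal D}_-(z)^{-1}\tilde{\mathcal D}_+(z)=\mathcal D_+(z)\mathcal D_-(z)^{-1}.$$ Thus, in terms of the Lax operator $\mathcal L(z)=\mathcal D_-(z)^{-1}\mathcal D_+(z)$ (as an element of $\widetilde{\mathrm{GL}}_n/(\mathrm{Ad}\,\mathbb T\times\mathbb R^* )$), the pentagram map is the refactorization $\mathcal D_-^{-1}(z)\mathcal D_+(z)\mapsto\mathcal D_+(z)\mathcal D_-^{-1}(z)$, i.e. it admits the Lax representation with spectral parameter $\mathcal L(z)\mapsto\mathcal D_+(z)\mathcal L(z)\mathcal D_+(z)^{-1}$.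
   Context: A scalar operator is a bi-infinite real sequence $a=(a_i)$ acting by $(aV)_i=a_iV_i$; $T$ is the left shift. An $n$-periodic difference operator is a finite sum $\sum_j a^{(j)}T^j$ with $n$-periodic coefficients; $\mathrm{DO}_n(J)$ consists of those of the form $\sum_{j\in J}a^{(j)}T^j$; for such $\mathcal D$, $\mathcal D_\pm=\sum_{j\in J_\pm}a^{(j)}T^j$. $\mathcal D(z)$ is the matrix Laurent polynomial obtained by sending a scalar operator $a$ to $\mathrm{diag}(a_1,\dots,a_n)$ and $T$ to the matrix with $1$'s at positions $(i,i+1)$ and $z$ at $(n,1)$. $\widetilde{\mathrm{GL}}_n$ is the group of invertible matrix-valued rational functions of $z$; $\mathrm{Ad}\,\mathbb T$ denotes conjugation by constant invertible diagonal matrices and $\mathbb R^*$ acts by $z\mapsto tz$. For $d=\max J-\min J-1$, a twisted $J$-corrugated $n$-gon is a sequence $v_i\in\mathbb{RP}^d$ with $v_{i+n}=M(v_i)$ ($M$ projective) such that for each $i$ the points $v_{i+j}$, $j\in J$, lie in a projective subspace of dimension $|J|-2$; $\mathcal D$ corresponds to it if $\mathcal DV=0$ for a lift $V$. The pentagram map associated with $(J_-,J_+)$ is $\tilde v_i=\mathrm{span}\{v_{i+j}:j\in J_-\}\cap\mathrm{span}\{v_{i+j}:j\in J_+\}$. *)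

(* Defs.v *)
From HB Require Import structures.
From mathcomp Require Import all_boot all_order all_algebra fraction.
Set Implicit Arguments. Unset Strict Implicit. Unset Printing Implicit Defensive.
Import Order.TTheory GRing.Theory Num.Theory.
Local Open Scope ring_scope.

Definition is_AP_with (d : nat) (J : seq int) : Prop :=
  exists (m : int) (k : nat), J = [seq m + (i%:Z * d%:Z) | i <- iota 0 k.+1].

Definition maxJ (J : seq int) : int := foldr Num.max (head 0 J) J.
Definition minJ (J : seq int) : int := foldr Num.min (head 0 J) J.
(* d + 1 where d = max J - min J - 1 is the dimension of the projective space *)
Definition ambdim (J : seq int) : nat := `|maxJ J - minJ J|%N.

(* An operator in DO_n(J) is  sum_{j in J} a^{(j)} T^j ; it is encoded by    *)
(* its coefficient function  a : int -> int -> R,  a j i = a^{(j)}_i, which   *)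
(* is required to be n-periodic in i.  Only the values for j in J matter.    *)
Definition periodic_coeffs (R : Type) (n : nat) (a : int -> int -> R) : Prop :=
  forall j i, a j (i + n%:Z) = a j i.

Definition applyDO (R : pzRingType) (a : int -> int -> R) (J : seq int)
  (V : int -> R) : int -> R :=
  fun i => \sum_(j <- J) a j i * V (i + j).

(* v_i in RP^d are given by a lift V_i in R^{d+1}\{0}; the twist condition   *)
(* v_{i+n} = M(v_i) reads V_{i+n} = c_i M V_i with c_i <> 0, M invertible;   *)
(* the corrugation condition says the |J| points v_{i+j}, j in J, lie in a    *)
(* projective subspace of dimension |J|-2, i.e. the V_{i+j} span a linear    *)
(* subspace of dimension <= |J|-1; and D corresponds to the polygon: D V = 0. *)
Definition window_matrix (R : fieldType) (m : nat) (J : seq int)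
  (V : int -> 'cV[R]_m) (i : int) : 'M[R]_(size J, m) :=
  \matrix_(k < size J) (V (i + J`_k))^T.

Definition corresponds_to_corrugated_polygon (R : fieldType) (n : nat)
  (J : seq int) (a : int -> int -> R) : Prop :=
  exists (V : int -> 'cV[R]_(ambdim J)) (M : 'M[R]_(ambdim J)) (c : int -> R),
    [/\ M \in unitmx,
        (forall i, V i != 0),
        (forall i, c i != 0 /\ V (i + n%:Z) = c i *: (M *m V i)),
        (forall i, (\rank (@window_matrix R (ambdim J) J V i) < size J)%N) &
        (forall i, \sum_(j <- J) a j i *: V (i + j) = 0)].

(* The matrix Laurent polynomial D(z), with entries in the field of rational *)
(* functions R(z) = {fraction {poly R}}.  Indices are 0-based: the scalar    *)
(* operator a goes to diag(a_0, ..., a_{n-1}) and T goes to the matrix with  *)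
(* 1 at (i, i+1) and z at (n-1, 0).                                          *)
Definition ratf (R : idomainType) (p : {poly R}) : {fraction {poly R}} :=
  @FracField.tofrac {poly R} p.

Definition zvar (R : idomainType) : {fraction {poly R}} := ratf 'X.

Definition Tmat (R : idomainType) (n : nat) : 'M[{fraction {poly R}}]_n :=
  \matrix_(i < n, j < n)
     (if ((i : nat).+1 == (j : nat))%N then 1
      else if (((i : nat) == n.-1) && ((j : nat) == 0))%N then zvar R else 0).

Definition Tpow (R : idomainType) (n : nat) (j : int) : 'M[{fraction {poly R}}]_n :=
  if (0 <= j) then Tmat R n ^+ `|j|%N else invmx (Tmat R n) ^+ `|j|%N.

Definition DOz (R : idomainType) (n : nat) (a : int -> int -> R) (J : seq int)
  : 'M[{fraction {poly R}}]_n :=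
  \sum_(j <- J) diag_mx (\row_(i < n) ratf (a j (i : nat)%:Z)%:P) *m Tpow R n j.

(* Main.v *)
Set Warnings "-notation-overridden -ambiguous-paths".
Require Import Defs.
From HB Require Import structures.
From mathcomp Require Import all_boot all_order all_algebra fraction.
Import Order.TTheory GRing.Theory Num.Theory.
Local Open Scope ring_scope.
Set Implicit Arguments. Unset Strict Implicit.

Section T.
Variable R : idomainType.
Variable n : nat.
Local Notation K := {fraction {poly R}}.
Local Notation T := (Tmat R n.+1).

Definition wT (i : 'I_n.+1) : K := if (i : nat) == n then zvar R else 1.

Lemma zvar_neq0 : zvar R != 0.
Proof. by rewrite /zvar /ratf tofrac_eq0 polyX_eq0. Qed.

Lemma wT_neq0 i : wT i != 0.
Proof. rewrite /wT; case: ifP => _; [exact: zvar_neq0| exact: oner_neq0]. Qed.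

Lemma TmatE i j : T i j = ((ordS i == j)%:R * wT i).
Proof.
rewrite /Tmat mxE /wT -(inj_eq val_inj) /=.
have ltin := ltn_ord i.
case: (ltnP i n) => hi.
  rewrite modn_small // (ltn_eqF hi) mulr1.
    by case: eqP.
have ein : (i : nat) = n by apply/eqP; rewrite eqn_leq hi -ltnS ltin.
rewrite ein modnn eqxx /=.
have -> : (n.+1 == j) = false by apply/negbTE; rewrite neq_ltn ltn_ord orbT.
by case: (j : nat) => [|k] /=; rewrite ?mul1r ?mul0r.
Qed.

Definition Tinv : 'M[K]_n.+1 := \matrix_(m, l) ((ordS l == m)%:R * (wT l)^-1).

Lemma T_Tinv : T *m Tinv = 1%:M.
Proof.
apply/matrixP=> i l; rewrite !mxE (bigD1 (ordS i)) //= big1 => [|m hm].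
  rewrite addr0 TmatE !mxE eqxx mul1r (inj_eq (@ordS_inj _)).
  rewrite eq_sym; have [->|_] := eqVneq i l; last by rewrite !mul0r mulr0.
  rewrite mul1r mulfV //; exact: wT_neq0.
by rewrite [T _ _]TmatE eq_sym (negbTE hm) !mul0r.
Qed.

Lemma T_unit : T \in unitmx.
Proof. exact: (proj1 (mulmx1_unit T_Tinv)). Qed.

Lemma T_diag (r : 'rV[K]_n.+1) :
  T *m diag_mx r = diag_mx (\row_i r 0 (ordS i)) *m T.
Proof.
apply/matrixP=> i j; rewrite mul_mx_diag mul_diag_mx [LHS]mxE [RHS]mxE TmatE !mxE.
by case: eqP => [->|_]; rewrite ?mul0r ?mulr0 // mul1r mulrC.
Qed.

Definition rowf (b : int -> R) : 'rV[K]_n.+1 := \row_(i < n.+1) ratf (b (i : nat)%:Z)%:P.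
Definition perz (b : int -> R) := forall i, b (i + n.+1%:Z) = b i.

Lemma rowf_ext b b' : (forall x, b x = b' x) -> rowf b = rowf b'.
Proof. by move=> h; apply/matrixP=> i j; rewrite !mxE h. Qed.

Lemma perz_shift b c : perz b -> perz (fun x => b (x + c)).
Proof. by move=> h i /=; rewrite addrAC h. Qed.

Lemma per_mod b : perz b -> forall m : nat, b ((m %% n.+1)%N%:Z) = b m%:Z.
Proof.
move=> h m; rewrite {2}(divn_eq m n.+1); elim: (m %/ n.+1)%N => [|q IH].
  by rewrite mul0n add0n.
by rewrite mulSn -addnA [in RHS]PoszD addrC h IH.
Qed.

Lemma T_rowf b : perz b -> T *m diag_mx (rowf b) = diag_mx (rowf (fun x => b (x + 1))) *m T.
Proof.
move=> h; rewrite T_diag; congr (diag_mx _ *m _); apply/matrixP=> i j; rewrite !mxE /=.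
by rewrite per_mod // intS addrC.
Qed.

Lemma pow_rowf (A : 'M[K]_n.+1) c :
  (forall b, perz b -> A *m diag_mx (rowf b) = diag_mx (rowf (fun x => b (x + c))) *m A) ->
  forall k b, perz b -> A ^+ k *m diag_mx (rowf b) = diag_mx (rowf (fun x => b (x + k%:Z * c))) *m A ^+ k.
Proof.
move=> hA; elim=> [|k IH] b hb.
  rewrite expr0 mul1mx mulmx1; congr diag_mx; apply: rowf_ext => x; by rewrite mul0r addr0.
rewrite exprS -mulmxA IH // mulmxA hA; last exact: perz_shift.
rewrite -mulmxA; congr (diag_mx _ *m _); apply: rowf_ext => x.
by rewrite -addrA intS mulrDl mul1r (addrC c).
Qed.

Lemma Tinv_rowf b : perz b ->
  invmx T *m diag_mx (rowf b) = diag_mx (rowf (fun x => b (x + -1))) *m invmx T.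
Proof.
move=> hb.
have h : T *m diag_mx (rowf (fun x => b (x + -1))) = diag_mx (rowf b) *m T.
  rewrite T_rowf; last exact: perz_shift.
  by congr (diag_mx _ *m _); apply: rowf_ext => x; rewrite addrK.
by rewrite -{1}(mulmxK T_unit (diag_mx (rowf b))) mulmxA -h mulKmx ?T_unit.
Qed.

Lemma Tpow_rowf j b : perz b ->
  Tpow R n.+1 j *m diag_mx (rowf b) = diag_mx (rowf (fun x => b (x + j))) *m Tpow R n.+1 j.
Proof.
move=> hb; rewrite /Tpow; case: j => k /=.
  by rewrite (pow_rowf (@T_rowf) k hb); congr (diag_mx _ *m _); apply: rowf_ext => x; rewrite mulr1.
rewrite (pow_rowf (@Tinv_rowf) k.+1 hb); congr (diag_mx _ *m _); apply: rowf_ext => x.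
by rewrite mulrN1 NegzE.
Qed.

Lemma T_inv_eq : T^-1 = invmx T. Proof. reflexivity. Qed.
Lemma T_unit' : T \is a GRing.unit. Proof. exact: T_unit. Qed.

Lemma Tpow_exprz j : Tpow R n.+1 j = T ^ j.
Proof.
rewrite /Tpow; case: j => k //=.
rewrite -T_inv_eq exprVn. reflexivity.
Qed.

Lemma Tpow_add k j : Tpow R n.+1 k *m Tpow R n.+1 j = Tpow R n.+1 (k + j).
Proof. rewrite !Tpow_exprz (exprzDr T_unit'). reflexivity. Qed.

Lemma ratfC_mul (x y : R) : ratf (x * y)%:P = ratf x%:P * ratf y%:P.
Proof. by rewrite /ratf polyCM tofracM. Qed.

Lemma diag_rowf_mul f g :
  diag_mx (rowf f) *m diag_mx (rowf g) = diag_mx (rowf (fun x => f x * g x)).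
Proof. by rewrite mulmx_diag; congr diag_mx; apply/matrixP=> i j; rewrite !mxE ratfC_mul. Qed.

Lemma diag_rowf0 f (M : 'M[K]_n.+1) : (forall x, f x = 0) -> diag_mx (rowf f) *m M = 0.
Proof.
move=> h; apply/matrixP=> i j; rewrite mul_diag_mx !mxE h.
by rewrite /ratf polyC0 tofrac0 mul0r.
Qed.

Lemma sum_diag_rowf (I : Type) (r : seq I) (F : I -> int -> R) (M : 'M[K]_n.+1) :
  \sum_(i <- r) diag_mx (rowf (F i)) *m M = diag_mx (rowf (fun x => \sum_(i <- r) F i x)) *m M.
Proof.
elim: r => [|i r IH].
  by rewrite big_nil; apply/esym/diag_rowf0 => x; rewrite big_nil.
rewrite big_cons IH; apply/matrixP=> p q; rewrite mxE !mul_diag_mx !mxE big_cons.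
by rewrite /ratf polyCD tofracD mulrDl.
Qed.

Lemma regroup (S : seq int) (k : int) f :
  uniq S -> k \in S ->
  diag_mx (rowf f) *m Tpow R n.+1 k =
  \sum_(s <- S) diag_mx (rowf (fun x => (k == s)%:R * f x)) *m Tpow R n.+1 s.
Proof.
move=> uS kS; rewrite (bigD1_seq k) //= big1 => [|s hs].
  rewrite addr0; congr (diag_mx _ *m _); apply: rowf_ext => x; by rewrite eqxx mul1r.
by apply: diag_rowf0 => x; rewrite eq_sym (negbTE hs) mul0r.
Qed.

Lemma DOzE (c : int -> int -> R) J :
  DOz n.+1 c J = \sum_(j <- J) diag_mx (rowf (c j)) *m Tpow R n.+1 j.
Proof. by []. Qed.

Lemma expand (c b : int -> int -> R) P Q : (forall j, perz (b j)) ->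
  DOz n.+1 c P *m DOz n.+1 b Q =
  \sum_(k <- P) \sum_(j <- Q) diag_mx (rowf (fun x => c k x * b j (x + k))) *m Tpow R n.+1 (k + j).
Proof.
move=> hb; rewrite !DOzE mulmx_suml; apply: eq_bigr => k _.
rewrite mulmx_sumr; apply: eq_bigr => j _.
by rewrite -!mulmxA (mulmxA (Tpow _ _ k)) Tpow_rowf // -mulmxA Tpow_add mulmxA diag_rowf_mul.
Qed.

Lemma group (g : int -> int -> int -> R) P Q S : uniq S ->
  (forall k j, k \in P -> j \in Q -> k + j \in S) ->
  \sum_(k <- P) \sum_(j <- Q) diag_mx (rowf (g k j)) *m Tpow R n.+1 (k + j) =
  \sum_(s <- S) diag_mx (rowf (fun x => \sum_(k <- P) \sum_(j <- Q) (k + j == s)%:R * g k j x))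
     *m Tpow R n.+1 s.
Proof.
move=> uS hS.
transitivity (\sum_(k <- P) \sum_(s <- S) \sum_(j <- Q)
   diag_mx (rowf (fun x => (k + j == s)%:R * g k j x)) *m Tpow R n.+1 s).
  apply: eq_big_seq => k kP; rewrite exchange_big /=.
  by apply: eq_big_seq => j jQ; apply: regroup => //; apply: hS.
rewrite exchange_big /=; apply: eq_bigr => s _.
rewrite -sum_diag_rowf; apply: eq_bigr => k _.
by rewrite sum_diag_rowf.
Qed.
End T.

Lemma coeff_id (R : pzRingType) (a at_ : int -> int -> R) (Jm Jp : seq int) :
  (forall (V : int -> R) (i : int),
      applyDO at_ Jp (applyDO a Jm V) i = applyDO at_ Jm (applyDO a Jp V) i) ->
  forall x s,
  \sum_(k <- Jp) \sum_(j <- Jm) (k + j == s)%:R * (at_ k x * a j (x + k)) =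
  \sum_(k <- Jm) \sum_(j <- Jp) (k + j == s)%:R * (at_ k x * a j (x + k)).
Proof.
move=> h x s; have := h (fun p => (p == x + s)%:R) x.
rewrite /applyDO => e.
have E : forall P Q, \sum_(k <- P) at_ k x * \sum_(j <- Q) a j (x + k) * ((x + k + j == x + s)%:R : R)
   = \sum_(k <- P) \sum_(j <- Q) (k + j == s)%:R * (at_ k x * a j (x + k)).
  move=> P Q; apply: eq_bigr => k _; rewrite mulr_sumr; apply: eq_bigr => j _.
  rewrite -addrA (inj_eq (addrI x)).
  by case: (k + j == s); rewrite ?mulr1 ?mul1r ?mulr0 ?mul0r.
by rewrite -!E.
Qed.

Unset Implicit Arguments.
Theorem mainTheorem8 (R : realFieldType) (n : nat) (Jm Jp : seq int) (dJ : nat)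
  (a at_ : int -> int -> R) :
  (0 < n)%N ->
  (0 < dJ)%N -> is_AP_with dJ Jm -> is_AP_with dJ Jp ->
  ~~ has (fun j => j \in Jp) Jm ->
  periodic_coeffs n a -> periodic_coeffs n at_ ->
  (* D corresponds to a (generic) twisted J-corrugated n-gon, J = Jm ++ Jp *)
  corresponds_to_corrugated_polygon n (Jm ++ Jp) a ->
  (* genericity: the inverses in the statement exist *)
  DOz n a Jm \in unitmx -> DOz n at_ Jm \in unitmx ->
  (* tilde D_+ D_- = tilde D_- D_+ as operators on bi-infinite sequences *)
  (forall (V : int -> R) (i : int),
      applyDO at_ Jp (applyDO a Jm V) i = applyDO at_ Jm (applyDO a Jp V) i) ->
  invmx (DOz n at_ Jm) *m DOz n at_ Jp = DOz n a Jp *m invmx (DOz n a Jm).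
Proof.
case: n => [//|n] _ _ _ _ _ pa _ _ ua uat h.
have hb : forall j, perz n (a j) by move=> j i; exact: pa.
set S := undup ([seq k + j | k <- Jp, j <- Jm] ++ [seq k + j | k <- Jm, j <- Jp]).
have uS : uniq S by exact: undup_uniq.
have E : DOz n.+1 at_ Jp *m DOz n.+1 a Jm = DOz n.+1 at_ Jm *m DOz n.+1 a Jp.
  rewrite !expand //.
  rewrite (@group _ n (fun k j x => at_ k x * a j (x + k)) _ _ _ uS); last first.
    by move=> k j kP jQ; rewrite mem_undup mem_cat allpairs_f.
  rewrite (@group _ n (fun k j x => at_ k x * a j (x + k)) _ _ _ uS); last first.
    by move=> k j kP jQ; rewrite mem_undup mem_cat; apply/orP; right; apply: allpairs_f.
  apply: eq_bigr => s _; congr (diag_mx _ *m _); apply: rowf_ext => x.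
  exact: coeff_id.
by rewrite -[LHS](mulmxK ua) -(mulmxA (invmx _)) E (mulKmx uat).
Qed.
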